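(* Assume inhibitory coupling ($\varepsilon_{ij}\le0$ for all $i,j$ and $\varepsilon<0$). Let $\boldsymbol\delta\in\mathbb R^N$ with $\delta_i\ge0$ for all $i$, and suppose $\boldsymbol\delta$ is not a multiple of $(1,\dots,1)^{\mathsf T}$. Put - $\delta_M=\max_i\delta_i$; - $\delta_m=\max\{\delta_i:\delta_i<\delta_M\}$; - $\mathbb M=\{j:\delta_j=\delta_M\}$. Then for every ordering $\mathcal O$ and every $i$, $$(A(\mathcal O)\boldsymbol\delta)_i\le\delta_M-(\delta_M-\delta_m)\sum_{j\notin\mathbb M}A_{ij}(\mathcal O),$$ and $A(\mathcal O)\boldsymbol\delta$ has nonnegative components. In particular: - if there is no $i$ with $\mathrm{Pre}(i)\cup\{i\}\subseteq\mathbb M$, then $\max_i(A(\mathcal O)\boldsymbol\delta)_i<\delta_M$; - if such an $i$ exists, then $\max_i(A(\mathcal O)\boldsymbol\delta)_i=\delta_M$.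
   Context: Let $U$ be a twice continuously differentiable, strictly increasing function on an interval $I\subseteq\mathbb R$ containing $(-\infty,1]$. Assume $U'>0$ and $U''<0$ on $I$, $U(0)=0$ and $U(1)=1$. Fix $N\ge 2$ and a delay $\tau\in(0,1)$. For each $i$ fix a nonempty set $\mathrm{Pre}(i)\subseteq\{1,\dots,N\}\setminus\{i\}$ and put $k_i=|\mathrm{Pre}(i)|$. Fix real couplings $\varepsilon_{ij}$ with $\varepsilon_{ij}\neq0$ if and only if $j\in\mathrm{Pre}(i)$, normalized so that $\sum_j\varepsilon_{ij}=\varepsilon$ for every $i$. An ordering $\mathcal O$ is a choice, for each $i$, of an enumeration $j_1(i),\dots,j_{k_i}(i)$ of $\mathrm{Pre}(i)$. For $n\in\{0,\dots,k_i\}$ define $$p_{i,n}=\frac{U'\Big(U^{-1}\big(U(\tau)+\sum_{m=1}^{n}\varepsilon_{ij_m(i)}\big)\Big)}{U'\big(U^{-1}(U(\tau)+\varepsilon)\big)}.$$ The stability matrix $A(\mathcal O)$ has entries - $A_{ii}=p_{i,0}$; - $A_{ij}=p_{i,n}-p_{i,n-1}$ if $j=j_n(i)$; - $A_{ij}=0$ if $j\notin\mathrm{Pre}(i)\cup\{i\}$. *)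

(* Defs.v *)
From Stdlib Require Import Reals List ClassicalEpsilon.
Open Scope R_scope.

Fixpoint sumN (n : nat) (f : nat -> R) : R :=
  match n with O => 0 | S k => sumN k f + f k end.

(* derivative of f at x relative to the set D (one-sided at endpoints) *)
Definition deriv_within (D : R -> Prop) (f : R -> R) (x l : R) : Prop :=
  forall e, 0 < e -> exists d, 0 < d /\
    forall h, h <> 0 -> Rabs h < d -> D (x + h) ->
      Rabs ((f (x + h) - f x) / h - l) < e.

Definition cont_within (D : R -> Prop) (f : R -> R) (x : R) : Prop :=
  forall e, 0 < e -> exists d, 0 < d /\
    forall y, D y -> Rabs (y - x) < d -> Rabs (f y - f x) < e.

Definition is_interval (I : R -> Prop) : Prop :=
  forall x y z, I x -> I z -> x <= y -> y <= z -> I y.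

(* U^{-1}(y): the point x of I with U x = y (chosen by epsilon; unique when
   U is strictly increasing on I and y is in the range). *)
Definition Uinv (I : R -> Prop) (U : R -> R) (y : R) : R :=
  epsilon (inhabits 0) (fun x => I x /\ U x = y).

(* sum of the first n couplings along the enumeration l of Pre(i) *)
Definition partial_eps (eps : nat -> nat -> R) (i : nat) (l : list nat) (n : nat) : R :=
  fold_right (fun j acc => eps i j + acc) 0 (firstn n l).

(* p_{i,n} for the ordering o (o i = enumeration j_1(i),...,j_{k_i}(i)) *)
Definition p_coef (I : R -> Prop) (U dU : R -> R) (tau epsT : R)
  (eps : nat -> nat -> R) (o : nat -> list nat) (i n : nat) : R :=
  dU (Uinv I U (U tau + partial_eps eps i (o i) n))
  / dU (Uinv I U (U tau + epsT)).

(* 0-based position of j in l *)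
Fixpoint pos (j : nat) (l : list nat) : nat :=
  match l with
  | nil => O
  | x :: l' => if Nat.eq_dec x j then O else S (pos j l')
  end.

Definition Amat (I : R -> Prop) (U dU : R -> R) (tau epsT : R)
  (eps : nat -> nat -> R) (o : nat -> list nat) (i j : nat) : R :=
  let p := p_coef I U dU tau epsT eps o i in
  if Nat.eq_dec j i then p O
  else if in_dec Nat.eq_dec j (o i) then
    p (S (pos j (o i))) - p (pos j (o i))
  else 0.

Definition Amul (N : nat) (A : nat -> nat -> R) (delta : nat -> R) (i : nat) : R :=
  sumN N (fun j => A i j * delta j).

Definition is_max_on (P : nat -> Prop) (f : nat -> R) (m : R) : Prop :=
  (exists i, P i /\ f i = m) /\ (forall i, P i -> f i <= m).

Definition is_ordering (N : nat) (Pre : nat -> nat -> Prop) (o : nat -> list nat) : Prop :=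
  forall i, (i < N)%nat -> NoDup (o i) /\ (forall j, In j (o i) <-> Pre i j).

(* Main.v *)
Require Import Defs.
From Stdlib Require Import Reals List Lra Lia ClassicalEpsilon Classical.
Open Scope R_scope.

Lemma sumN_ext n f g : (forall j, (j < n)%nat -> f j = g j) -> sumN n f = sumN n g.
Proof. induction n; simpl; intros H; auto. rewrite IHn by (intros; apply H; lia). rewrite H by lia. auto. Qed.

Lemma sumN_lin n a b f g : sumN n (fun j => a * f j - b * g j) = a * sumN n f - b * sumN n g.
Proof. induction n; simpl. ring. rewrite IHn. ring. Qed.

Lemma sumN_plus n f g : sumN n (fun j => f j + g j) = sumN n f + sumN n g.
Proof. induction n; simpl. ring. rewrite IHn. ring. Qed.

Lemma sumN_le n f g : (forall j, (j < n)%nat -> f j <= g j) -> sumN n f <= sumN n g.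
Proof. induction n; simpl; intros H. lra. assert (H1 := H n ltac:(lia)). assert (sumN n f <= sumN n g) by (apply IHn; intros; apply H; lia). lra. Qed.

Lemma sumN_nonneg n f : (forall j, (j < n)%nat -> 0 <= f j) -> 0 <= sumN n f.
Proof. intros H. replace 0 with (sumN n (fun _ => 0)). apply sumN_le; auto.
 induction n; simpl; auto. rewrite IHn; auto. ring. Qed.

Lemma sumN_zero n : sumN n (fun _ => 0) = 0.
Proof. induction n; simpl; auto. rewrite IHn; ring. Qed.

Lemma sumN_ge_term n f a : (forall j, (j < n)%nat -> 0 <= f j) -> (a < n)%nat -> f a <= sumN n f.
Proof. induction n; intros H Ha. lia. simpl.
 destruct (Nat.eq_dec a n). subst. assert (0 <= sumN n f) by (apply sumN_nonneg; intros; apply H; lia). lra.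
 assert (f a <= sumN n f) by (apply IHn; [intros; apply H; lia | lia]). assert (H1 := H n ltac:(lia)). lra. Qed.

Lemma sumN_single n a g : (a < n)%nat -> sumN n (fun j => if Nat.eq_dec j a then g j else 0) = g a.
Proof. induction n; intros Ha. lia. simpl. destruct (Nat.eq_dec n a).
 - subst. rewrite (sumN_ext _ _ (fun _ => 0)). rewrite sumN_zero; ring.
   intros j Hj. destruct (Nat.eq_dec j a); [lia|auto].
 - rewrite IHn by lia. ring. Qed.

Lemma sumN_shift n h : sumN (S n) h = h 0%nat + sumN n (fun k => h (S k)).
Proof. induction n. simpl. ring. change (sumN (S (S n)) h) with (sumN (S n) h + h (S n)).
 rewrite IHn. simpl. ring. Qed.

Lemma sumN_tele n p : sumN n (fun k => p (S k) - p k) = p n - p 0%nat.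
Proof. induction n; simpl. ring. rewrite IHn. ring. Qed.

Definition listsum (g : nat -> R) (l : list nat) : R := fold_right (fun j acc => g j + acc) 0 l.

Lemma listsum_ext g g' l : (forall j, In j l -> g j = g' j) -> listsum g l = listsum g' l.
Proof. induction l; simpl; intros H; auto. rewrite H by auto. rewrite IHl; auto. Qed.

Lemma listsum_ind N g l : NoDup l -> (forall j, In j l -> (j < N)%nat) ->
  sumN N (fun j => if in_dec Nat.eq_dec j l then g j else 0) = listsum g l.
Proof. induction l as [|a l IH]; intros Hnd Hlt.
 - simpl. apply sumN_zero.
 - change (listsum g (a::l)) with (g a + listsum g l). inversion Hnd; subst.
   rewrite (sumN_ext _ _ (fun j => (if Nat.eq_dec j a then g j else 0) + (if in_dec Nat.eq_dec j l then g j else 0))).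
   { rewrite sumN_plus, sumN_single by (apply Hlt; simpl; auto). rewrite IH; auto. intros; apply Hlt; simpl; auto. }
   intros j Hj. destruct (in_dec Nat.eq_dec j (a :: l)) as [H|H]; simpl in H;
   destruct (Nat.eq_dec j a); destruct (in_dec Nat.eq_dec j l); subst; try tauto; try ring.
   all: try (exfalso; intuition; fail).
Qed.

Lemma listsum_pos (l : list nat) (h : nat -> R) : NoDup l -> listsum (fun j => h (Defs.pos j l)) l = sumN (length l) h.
Proof. revert h. induction l as [|a l IH]; intros h Hnd; simpl. auto.
 inversion Hnd; subst. destruct (Nat.eq_dec a a); [|tauto].
 rewrite (listsum_ext _ (fun j => (fun k => h (S k)) (Defs.pos j l))).

 change (sumN (length l) h + h (length l)) with (sumN (S (length l)) h). rewrite sumN_shift. f_equal. apply (IH (fun k => h (S k)) H2).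
 intros j Hj. destruct (Nat.eq_dec a j); [subst; tauto| auto]. Qed.

Lemma pos_lt j l : In j l -> (Defs.pos j l < length l)%nat.
Proof. induction l; simpl; intros H. tauto. destruct (Nat.eq_dec a j). lia.
 destruct H; [tauto|]. specialize (IHl H). lia. Qed.

Lemma partial_S eps i l n : (n < length l)%nat ->
  partial_eps eps i l (S n) = partial_eps eps i l n + eps i (nth n l 0%nat).
Proof. unfold partial_eps. revert n. induction l; intros n Hn; simpl in Hn. lia.
 destruct n. simpl. ring. change (firstn (S (S n)) (a :: l)) with (a :: firstn (S n) l).
 change (firstn (S n) (a :: l)) with (a :: firstn n l). cbn [fold_right]. rewrite IHl by lia. simpl nth. ring. Qed.

Lemma partial_le0 eps i l n : (forall j, In j l -> eps i j <= 0) -> partial_eps eps i l n <= 0.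
Proof. unfold partial_eps. revert n. induction l; intros n H; destruct n; simpl; try lra.
 assert (eps i a <= 0) by (apply H; simpl; auto). assert (fold_right (fun j acc => eps i j + acc) 0 (firstn n l) <= 0) by (apply IHl; intros; apply H; simpl; auto). lra. Qed.

Lemma partial_full eps i l : partial_eps eps i l (length l) = listsum (eps i) l.
Proof. unfold partial_eps. rewrite firstn_all. reflexivity. Qed.

Lemma deriv_int (I : R -> Prop) f c l : (forall x, x <= 1 -> I x) -> deriv_within I f c l -> c < 1 -> derivable_pt_lim f c l.
Proof. intros HI1 H Hc e He. destruct (H e He) as [d [Hd Hh]].
 assert (Hp : 0 < Rmin d (1 - c)) by (apply Rmin_pos; lra).
 exists (mkposreal _ Hp). intros h Hh0 Hhl. simpl in Hhl. apply Hh; auto.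
 - apply Rlt_le_trans with (1 := Hhl), Rmin_l.
 - apply HI1. assert (Rabs h < 1 - c) by (apply Rlt_le_trans with (1 := Hhl), Rmin_r).
   assert (h <= Rabs h) by apply RRle_abs. lra. Qed.
Lemma dU_dec (I : R -> Prop) (dU d2U : R -> R) (HI1 : forall x, x <= 1 -> I x)
  (Hd2U : forall x, I x -> deriv_within I dU x (d2U x))
  (Hd2Uneg : forall x, I x -> d2U x < 0) a b : a < b -> b < 1 -> dU b < dU a.
Proof. intros Hab Hb1.
 destruct (MVT_cor2 dU d2U a b Hab) as [c [Hc1 Hc2]].
 { intros c Hc. apply deriv_int with I; auto; [apply Hd2U, HI1; lra | lra]. }
 assert (d2U c < 0) by (apply Hd2Uneg, HI1; lra). nra. Qed.

Lemma U_below (I : R -> Prop) (U dU d2U : R -> R) (HI1 : forall x, x <= 1 -> I x)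
  (HdU : forall x, I x -> deriv_within I U x (dU x))
  (Hd2U : forall x, I x -> deriv_within I dU x (d2U x))
  (Hd2Uneg : forall x, I x -> d2U x < 0) (HU0 : U 0 = 0) x : x < 0 -> U x <= dU 0 * x.
Proof. intros Hx.
 destruct (MVT_cor2 U dU x 0 Hx) as [c [Hc1 Hc2]].
 { intros c Hc. apply deriv_int with I; auto; [apply HdU, HI1; lra | lra]. }
 assert (dU 0 < dU c) by (apply (dU_dec I dU d2U); auto; lra). nra. Qed.

Lemma Uinv_spec (I : R -> Prop) (U dU d2U : R -> R) (HI1 : forall x, x <= 1 -> I x)
  (HdU : forall x, I x -> deriv_within I U x (dU x))
  (Hd2U : forall x, I x -> deriv_within I dU x (d2U x))
  (Hinc : forall x y, I x -> I y -> x < y -> U x < U y)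
  (HdUpos : forall x, I x -> 0 < dU x)
  (Hd2Uneg : forall x, I x -> d2U x < 0) (HU0 : U 0 = 0) tau (Htau : 0 < tau < 1) y :
  y <= U tau -> I (Uinv I U y) /\ U (Uinv I U y) = y /\ Uinv I U y <= tau.
Proof. intros Hy.
 assert (Hex : exists x, I x /\ U x = y).
 { destruct (Req_dec y (U tau)) as [E|E].
   - exists tau; split; [apply HI1; lra | auto].
   - assert (HdU0 : 0 < dU 0) by (apply HdUpos, HI1; lra).
     set (x0 := -(Rabs y)/dU 0 - 1).
     assert (Ha : 0 <= Rabs y / dU 0) by (unfold Rdiv; apply Rmult_le_pos; [apply Rabs_pos| left; apply Rinv_0_lt_compat; lra]).
     assert (Hx0 : x0 < 0) by (unfold x0; unfold Rdiv in *; lra).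
     assert (HUx0 := U_below I U dU d2U HI1 HdU Hd2U Hd2Uneg HU0 x0 Hx0).
     assert (E2 : dU 0 * x0 = - Rabs y - dU 0) by (unfold x0; field; lra).
     assert (-Rabs y <= y) by (pose proof (Rabs_pos y); pose proof (Rle_abs (-y)); rewrite Rabs_Ropp in *; lra).
     destruct (Ranalysis5.IVT_interv (fun z => U z - y) x0 tau) as [z [Hz1 Hz2]].
     + intros a Ha'. apply continuity_pt_minus.
       * apply derivable_continuous_pt. exists (dU a). apply deriv_int with I; auto; [apply HdU, HI1; lra | lra].
       * apply continuity_pt_const. unfold constant; auto.
     + lra.
     + lra.
     + lra.
     + exists z. split; [apply HI1; lra | lra]. }
 destruct (epsilon_spec (inhabits 0) (fun x => I x /\ U x = y) Hex) as [H1 H2].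
 unfold Uinv. split; [auto|split; [auto|]].
 destruct (Rle_lt_dec (epsilon (inhabits 0) (fun x => I x /\ U x = y)) tau) as [|Hlt]; auto.
 exfalso. assert (HI : I tau) by (apply HI1; lra). specialize (Hinc _ _ HI H1 Hlt). lra. Qed.

Theorem mainTheorem6
  (I : R -> Prop) (U dU d2U : R -> R)
  (HI : is_interval I) (HI1 : forall x, x <= 1 -> I x)
  (HdU : forall x, I x -> deriv_within I U x (dU x))
  (Hd2U : forall x, I x -> deriv_within I dU x (d2U x))
  (Hd2Uc : forall x, I x -> cont_within I d2U x)
  (Hinc : forall x y, I x -> I y -> x < y -> U x < U y)
  (HdUpos : forall x, I x -> 0 < dU x)
  (Hd2Uneg : forall x, I x -> d2U x < 0)
  (HU0 : U 0 = 0) (HU1 : U 1 = 1)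
  (N : nat) (HN : (2 <= N)%nat)
  (tau : R) (Htau : 0 < tau < 1)
  (Pre : nat -> nat -> Prop)
  (HPre : forall i j, (i < N)%nat -> Pre i j -> (j < N)%nat /\ j <> i)
  (HPre_ne : forall i, (i < N)%nat -> exists j, Pre i j)
  (eps : nat -> nat -> R) (epsT : R)
  (Heps : forall i j, (i < N)%nat -> (j < N)%nat -> (eps i j <> 0 <-> Pre i j))
  (Hnorm : forall i, (i < N)%nat -> sumN N (fun j => eps i j) = epsT)
  (Hinh : forall i j, (i < N)%nat -> (j < N)%nat -> eps i j <= 0)
  (HepsT : epsT < 0)
  (delta : nat -> R) (Hdelta : forall i, (i < N)%nat -> 0 <= delta i)
  (Hnc : ~ (exists c, forall i, (i < N)%nat -> delta i = c))
  (dM dm : R)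
  (HdM : is_max_on (fun i => (i < N)%nat) delta dM)
  (Hdm : is_max_on (fun i => (i < N)%nat /\ delta i < dM) delta dm) :
  forall o : nat -> list nat, is_ordering N Pre o ->
  let A := Amat I U dU tau epsT eps o in
  (forall i, (i < N)%nat ->
     Amul N A delta i
       <= dM - (dM - dm) * sumN N (fun j => if Req_EM_T (delta j) dM then 0 else A i j)
     /\ 0 <= Amul N A delta i)
  /\ ((~ exists i, (i < N)%nat /\ delta i = dM /\ (forall j, Pre i j -> delta j = dM)) ->
        forall m, is_max_on (fun i => (i < N)%nat) (Amul N A delta) m -> m < dM)
  /\ ((exists i, (i < N)%nat /\ delta i = dM /\ (forall j, Pre i j -> delta j = dM)) ->
        forall m, is_max_on (fun i => (i < N)%nat) (Amul N A delta) m -> m = dM).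
Proof.
 intros o Ho A. subst A.
 assert (HUs : forall y, y <= U tau -> I (Uinv I U y) /\ U (Uinv I U y) = y /\ Uinv I U y <= tau)
   by (intros; apply (Uinv_spec I U dU d2U); auto).
 assert (HUlt : forall y1 y2, y1 < y2 -> y2 <= U tau -> Uinv I U y1 < Uinv I U y2).
 { intros y1 y2 H12 H2. destruct (HUs y1 ltac:(lra)) as [I1 [E1 _]]. destruct (HUs y2 H2) as [I2 [E2 _]].
   destruct (Rlt_le_dec (Uinv I U y1) (Uinv I U y2)) as [|Hle]; auto. exfalso.
   destruct (Rle_lt_or_eq_dec _ _ Hle) as [Hl|He].
   - specialize (Hinc _ _ I2 I1 Hl). lra.
   - rewrite He in E2. lra. }
 assert (HdUd : forall a b, a < b -> b < 1 -> dU b < dU a) by (intros; apply (dU_dec I dU d2U); auto).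
 assert (Hrow : forall i, (i < N)%nat ->
   sumN N (fun j => Amat I U dU tau epsT eps o i j) = 1 /\
   (forall j, (j < N)%nat -> 0 <= Amat I U dU tau epsT eps o i j) /\
   (forall j, (j < N)%nat -> (j = i \/ Pre i j) -> 0 < Amat I U dU tau epsT eps o i j)).
 { intros i Hi. destruct (Ho i Hi) as [Hnd Hin].
   assert (Hlt : forall j, In j (o i) -> (j < N)%nat) by (intros j Hj; apply (HPre i j Hi), Hin, Hj).
   assert (HD : partial_eps eps i (o i) (length (o i)) = epsT).
   { rewrite partial_full, <- (listsum_ind N) by auto. rewrite <- (Hnorm i Hi). apply sumN_ext.
     intros j Hj. destruct (in_dec Nat.eq_dec j (o i)) as [|n]; auto.
     destruct (Req_dec (eps i j) 0) as [|Hne]; auto. exfalso; apply n, Hin, (Heps i j Hi Hj); auto. }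
   assert (Hle0 : forall j, In j (o i) -> eps i j <= 0) by (intros; apply Hinh; auto).
   assert (Hneg : forall j, In j (o i) -> eps i j < 0).
   { intros j Hj. destruct (Heps i j Hi (Hlt j Hj)) as [_ H]. specialize (H (proj1 (Hin j) Hj)).
     assert (eps i j <= 0) by auto. lra. }
   assert (Hpl : forall n, U tau + partial_eps eps i (o i) n <= U tau)
     by (intros n; pose proof (partial_le0 eps i (o i) n Hle0); lra).
   assert (HD0 : 0 < dU (Uinv I U (U tau + epsT))).
   { apply HdUpos. rewrite <- HD. apply HUs, Hpl. }
   set (P := p_coef I U dU tau epsT eps o i).
   assert (Hp0 : 0 < P 0%nat).
   { unfold P, p_coef. unfold Rdiv. apply Rmult_lt_0_compat; [|apply Rinv_0_lt_compat; auto].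
     apply HdUpos. apply HUs, Hpl. }
   assert (Hps : forall n, (n < length (o i))%nat -> P n < P (S n)).
   { intros n Hn. unfold P, p_coef. unfold Rdiv. apply Rmult_lt_compat_r; [apply Rinv_0_lt_compat; auto|].
     apply HdUd.
     - apply HUlt; [|apply Hpl]. rewrite partial_S by auto.
       pose proof (Hneg _ (nth_In (o i) 0%nat Hn)). lra.
     - destruct (HUs _ (Hpl n)) as [_ [_ Ht]]. lra. }
   assert (HpK : P (length (o i)) = 1).
   { unfold P, p_coef. rewrite HD. field. lra. }
   assert (Hi_notin : ~ In i (o i)).
   { intros Hii. destruct (HPre i i Hi (proj1 (Hin i) Hii)); auto. }
   split; [|split].
   - rewrite (sumN_ext _ _ (fun j => (if Nat.eq_dec j i then (fun _ => P 0%nat) j else 0) +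
        (if in_dec Nat.eq_dec j (o i) then (fun j => (fun k => P (S k) - P k) (Defs.pos j (o i))) j else 0))).
     + rewrite sumN_plus, (sumN_single N i (fun _ => P 0%nat)) by auto.
       rewrite (listsum_ind N (fun j => (fun k => P (S k) - P k) (Defs.pos j (o i))) (o i)) by auto.
       rewrite (listsum_pos (o i) (fun k => P (S k) - P k)) by auto.
       rewrite sumN_tele. lra.
     + intros j Hj. unfold Amat. cbv zeta. fold P.
       destruct (Nat.eq_dec j i) as [e|ne].
       * subst j. destruct (in_dec Nat.eq_dec i (o i)); [tauto|ring].
       * destruct (in_dec Nat.eq_dec j (o i)); ring.
   - intros j Hj. unfold Amat. cbv zeta. fold P.
     destruct (Nat.eq_dec j i); [lra|]. destruct (in_dec Nat.eq_dec j (o i)) as [Hj'|]; [|lra].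
     pose proof (Hps _ (pos_lt _ _ Hj')). lra.
   - intros j Hj Hji. unfold Amat. cbv zeta. fold P.
     destruct (Nat.eq_dec j i); [lra|]. destruct (in_dec Nat.eq_dec j (o i)) as [Hj'|Hj'].
     + pose proof (Hps _ (pos_lt _ _ Hj')). lra.
     + exfalso. destruct Hji as [|Hp]; [tauto|]. apply Hj', Hin, Hp. }
 set (A := Amat I U dU tau epsT eps o) in *.
 destruct HdM as [[iM [HiM HdMe]] HdMle].
 destruct Hdm as [[im [[Him Himlt] Hdme]] Hdmle].
 assert (Hdmlt : dm < dM) by lra.
 assert (Hmain : forall i, (i < N)%nat ->
     Amul N A delta i
       <= dM - (dM - dm) * sumN N (fun j => if Req_EM_T (delta j) dM then 0 else A i j)
     /\ 0 <= Amul N A delta i).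
 { intros i Hi. destruct (Hrow i Hi) as [Hs [Hnn _]]. split.
   - unfold Amul. replace (dM - (dM - dm) * sumN N (fun j => if Req_EM_T (delta j) dM then 0 else A i j))
       with (dM * sumN N (fun j => A i j) - (dM - dm) * sumN N (fun j => if Req_EM_T (delta j) dM then 0 else A i j))
       by (rewrite Hs; ring).
     rewrite <- sumN_lin. apply sumN_le. intros j Hj.
     destruct (Req_EM_T (delta j) dM) as [e|ne].
     + rewrite e. lra.
     + assert (delta j <= dM) by (apply HdMle; auto).
       assert (delta j <= dm) by (apply Hdmle; split; auto; lra).
       pose proof (Hnn j Hj). nra.
   - unfold Amul. apply sumN_nonneg. intros j Hj. apply Rmult_le_pos; auto. }
 split; [exact Hmain|split].
 - intros Hno m [[i0 [Hi0 Hm]] _]. rewrite <- Hm.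
   destruct (Hmain i0 Hi0) as [Hb _]. destruct (Hrow i0 Hi0) as [_ [Hnn Hpos]].
   assert (Hex : exists j, (j < N)%nat /\ delta j <> dM /\ (j = i0 \/ Pre i0 j)).
   { destruct (Req_dec (delta i0) dM) as [e|ne].
     - apply NNPP. intros Hc. apply Hno. exists i0. split; [auto|split; [auto|]].
       intros j Hj. apply NNPP. intros Hne. apply Hc. exists j.
       split; [apply (HPre i0 j Hi0 Hj)|]. auto.
     - exists i0. auto. }
   destruct Hex as [j [Hj [Hne Hji]]].
   assert (Hpos' : 0 < sumN N (fun j => if Req_EM_T (delta j) dM then 0 else A i0 j)).
   { apply Rlt_le_trans with (if Req_EM_T (delta j) dM then 0 else A i0 j).
     - destruct (Req_EM_T (delta j) dM); [tauto|]. apply Hpos; auto.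
     - apply (sumN_ge_term N (fun j => if Req_EM_T (delta j) dM then 0 else A i0 j)); auto.
       intros k Hk. destruct (Req_EM_T (delta k) dM); [lra|]. apply Hnn; auto. }
   nra.
 - intros [i [Hi [Hdi Hpre]]] m [[i0 [Hi0 Hm]] Hmle].
   destruct (Hrow i Hi) as [Hs [Hnn _]].
   assert (HAi : Amul N A delta i = dM).
   { unfold Amul. rewrite <- (Rmult_1_r dM) at 1. rewrite <- Hs.
     transitivity (sumN N (fun j => dM * A i j - 0 * A i j)).
     - apply sumN_ext. intros j Hj.
       destruct (Nat.eq_dec j i) as [e|ne]; [subst; rewrite Hdi; ring|].
       destruct (in_dec Nat.eq_dec j (o i)) as [Hj'|Hj'].
       + rewrite (Hpre j (proj1 (proj2 (Ho i Hi) j) Hj')). ring.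
       + unfold A, Amat. cbv zeta. destruct (Nat.eq_dec j i); [tauto|].
         destruct (in_dec Nat.eq_dec j (o i)); [tauto|]. ring.
     - rewrite sumN_lin. change (sumN N (fun j : nat => A i j)) with (sumN N (A i)). ring. }
   assert (dM <= m) by (rewrite <- HAi; apply Hmle; auto).
   destruct (Hmain i0 Hi0) as [Hb _].
   assert (0 <= sumN N (fun j => if Req_EM_T (delta j) dM then 0 else A i0 j)).
   { apply sumN_nonneg. intros k Hk. destruct (Req_EM_T (delta k) dM); [lra|]. apply (Hrow i0 Hi0); auto. }
   rewrite Hm in Hb. nra.
Qed.
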